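(* Assume $\mu_n\to0$. Then $\hat\theta_A$ is uniformly consistent for $\theta$: for every $\varepsilon>0$, $$\lim_{n\to\infty}\sup_{\theta\in\mathbb R}P_{n,\theta}\big(|\hat\theta_A-\theta|>\varepsilon\big)=0.$$ Furthermore, with $a_n=\min(n^{1/2},\mu_n^{-1})$, for every $\varepsilon>0$ there exists a real $M\ge0$ such that $$\sup_{n\in\mathbb N}\sup_{\theta\in\mathbb R}P_{n,\theta}\big(a_n|\hat\theta_A-\theta|>M\big)<\varepsilon .$$
   Context: Gaussian location model: for each sample size $n$, $y_1,\dots,y_n$ are i.i.d. $N(\theta,1)$ with $\theta\in\mathbb R$ unknown; $\bar y$ is their mean. $P_{n,\theta}$ denotes the probability governing a sample of size $n$ when $\theta$ is the true parameter. Given a nonrandom tuning parameter $\mu_n>0$, the adaptive LASSO estimator is $\hat\theta_A=0$ if $|\bar y|\le\mu_n$ and $\hat\theta_A=\bar y-\mu_n^2/\bar y$ if $|\bar y|>\mu_n$. *)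

(* Defs.v *)
From Stdlib Require Import Reals Lra ClassicalEpsilon.
Open Scope R_scope.

(* Adaptive LASSO estimator as a function of the sample mean ybar. *)
Definition thetaA (mu ybar : R) : R :=
  if Rle_dec (Rabs ybar) mu then 0 else ybar - mu ^ 2 / ybar.

(* Density of ybar ~ N(theta, 1/n) (the mean of n iid N(theta,1)). *)
Definition ybar_density (n : nat) (theta y : R) : R :=
  sqrt (INR n / (2 * PI)) * exp (- (INR n * (y - theta) ^ 2) / 2).

Definition ind (A : R -> Prop) (y : R) : R :=
  match excluded_middle_informative (A y) with
  | left _ => 1 | right _ => 0 end.

Definition is_prob (n : nat) (theta : R) (A : R -> Prop) (p : R) : Prop :=
  forall eps, 0 < eps -> exists T0, forall T, T0 <= T ->
    exists pr : Riemann_integrable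
                  (fun y => ybar_density n theta y * ind A y) (- T) T,
      Rabs (RiemannInt pr - p) < eps.

(* P_{n,theta}(ybar in A); an arbitrary real if the integral does not exist. *)
Definition Prob (n : nat) (theta : R) (A : R -> Prop) : R :=
  epsilon (inhabits 0) (fun p => is_prob n theta A p).

Definition a_n (mu : nat -> R) (n : nat) : R := Rmin (sqrt (INR n)) (/ mu n).

(* Main.v *)
Require Import Defs.
From Stdlib Require Import Reals Lra Lia ClassicalEpsilon Classical.
From Coquelicot Require Import Coquelicot.
Open Scope R_scope.
Notation ind := Defs.ind.
Lemma ind_in (Q : R -> Prop) y : Q y -> ind Q y = 1.
Proof. intro H; unfold ind; destruct (excluded_middle_informative (Q y)); tauto. Qed.
Lemma ind_out (Q : R -> Prop) y : ~ Q y -> ind Q y = 0.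
Proof. intro H; unfold ind; destruct (excluded_middle_informative (Q y)); tauto. Qed.

Definition S1 mu th c y := y < -mu /\ c < y - mu^2/y - th.
Definition S2 mu th c y := y < -mu /\ y - mu^2/y - th < -c.
Definition S3 mu th c y := -mu <= y <= mu /\ c < Rabs th.
Definition S4 mu th c y := mu < y /\ c < y - mu^2/y - th.
Definition S5 mu th c y := mu < y /\ y - mu^2/y - th < -c.

Ltac sol Hv := cbv beta; unfold S1, S2, S3, S4, S5; try rewrite Hv; split_Rabs; intuition lra.

Ltac rw Hv := repeat match goal with |- context [ind ?P ?y] =>
  first [rewrite (ind_in P y) by sol Hv | rewrite (ind_out P y) by sol Hv] end.

Lemma decomp mu th c y : 0 < mu -> 0 <= c ->
  ind (fun y => c < Rabs (thetaA mu y - th)) y =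
  ind (S1 mu th c) y + ind (S2 mu th c) y + ind (S3 mu th c) y + ind (S4 mu th c) y + ind (S5 mu th c) y.
Proof.
  intros Hmu Hc.
  set (G := y - mu^2/y - th).
  destruct (Rle_dec (Rabs y) mu) as [Hy|Hy].
  - assert (Hv : thetaA mu y = 0) by (unfold thetaA; destruct (Rle_dec (Rabs y) mu); tauto).
    assert (-mu <= y <= mu) by (split_Rabs; lra).
    destruct (Rlt_dec c (Rabs th)).
    + rewrite (ind_in _ y) by sol Hv. rewrite (ind_out (S1 _ _ _) y) by sol Hv.
      rewrite (ind_out (S2 _ _ _) y) by sol Hv. rewrite (ind_in (S3 _ _ _) y) by sol Hv.
      rewrite (ind_out (S4 _ _ _) y) by sol Hv. rewrite (ind_out (S5 _ _ _) y) by sol Hv. ring.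
    + rewrite (ind_out _ y) by sol Hv. rewrite (ind_out (S1 _ _ _) y) by sol Hv.
      rewrite (ind_out (S2 _ _ _) y) by sol Hv. rewrite (ind_out (S3 _ _ _) y) by sol Hv.
      rewrite (ind_out (S4 _ _ _) y) by sol Hv. rewrite (ind_out (S5 _ _ _) y) by sol Hv. ring.
  - assert (Hv : thetaA mu y = y - mu^2/y) by (unfold thetaA; destruct (Rle_dec (Rabs y) mu); tauto).
    assert (y < -mu \/ mu < y) by (split_Rabs; lra).
    destruct (Rlt_dec c (y - mu^2/y - th)); destruct (Rlt_dec (y - mu^2/y - th) (-c));
    destruct H; first [lra | rw Hv; ring].
Qed.

Lemma mono m x y : 0 <= m -> x < y -> 0 < x * y -> x - m / x < y - m / y.
Proof.
  intros Hm Hxy Hp.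
  assert (x <> 0) by (intro; subst; nra). assert (y <> 0) by (intro; subst; nra).
  assert (E : m / x - m / y = m * (y - x) / (x * y)) by (field; auto).
  assert (0 <= m * (y - x) / (x * y)).
  { unfold Rdiv. apply Rmult_le_pos. nra. left; apply Rinv_0_lt_compat; auto. }
  lra.
Qed.
Definition convex (Q : R -> Prop) := forall x y z, Q x -> Q z -> x < y < z -> Q y.


Lemma exR_zero a b : ex_RInt (fun _ : R => 0) a b.
Proof. apply (ex_RInt_const (V:=R_NormedModule)). Qed.

Lemma ind_convex f Q a b : (forall z, continuous f z) -> convex Q -> a <= b ->
  ex_RInt (fun y => f y * ind Q y) a b.
Proof.
  intros Hf HS Hab.
  set (E := fun x => a <= x <= b /\ Q x).
  destruct (classic (exists x, E x)) as [Hne | Hem].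
  2: { apply (ex_RInt_ext (fun _ => 0)). 2: apply exR_zero.
       intros x Hx. rewrite Rmin_left in Hx by lra. rewrite Rmax_right in Hx by lra.
       rewrite ind_out. rewrite Rmult_0_r; reflexivity. intro Sx. apply Hem. exists x. split; [lra|auto]. }
  destruct (completeness E) as [u [Hu1 Hu2]].
  { exists b. intros x [Hx _]. lra. } { exact Hne. }
  set (E' := fun x => E (- x)).
  destruct (completeness E') as [l' [Hl1 Hl2]].
  { exists (-a). intros x [Hx _]. lra. }
  { destruct Hne as [x Hx]. exists (-x). unfold E'. rewrite Ropp_involutive. auto. }
  set (l := - l').
  destruct Hne as [x0 Hx0].
  assert (Hxu : forall x, E x -> x <= u) by exact Hu1.
  assert (Hxl : forall x, E x -> l <= x).
  { intros x Ex. unfold l. assert (l' >= -x). { apply Rle_ge, Hl1. unfold E'. rewrite Ropp_involutive. auto. } lra. }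
  assert (Hub : u <= b). { apply Hu2. intros x [Hx _]. lra. }
  assert (Hla : a <= l). { unfold l. assert (l' <= -a). { apply Hl2. intros x [Hx _]. lra. } lra. }
  pose proof (Hxu x0 Hx0). pose proof (Hxl x0 Hx0).
  assert (Hmid : forall y, l < y < u -> Q y).
  { intros y Hy.
    assert (H2 : exists x2, E x2 /\ y < x2).
    { apply NNPP. intro N. assert (u <= y). { apply Hu2. intros x Ex. apply Rnot_lt_le. intro. apply N. eauto. } lra. }
    assert (H1 : exists x1, E x1 /\ x1 < y).
    { apply NNPP. intro N. assert (l' <= - y). { apply Hl2. intros x Ex. unfold E' in Ex.
        assert (~ (- x < y)) by (intro; apply N; eauto). lra. } unfold l in Hy. lra. }
    destruct H1 as [x1 [[_ S1] L1]]. destruct H2 as [x2 [[_ S2] L2]].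
    apply (HS x1 y x2); auto. }
  apply (ex_RInt_Chasles _ a l b).
  { apply (ex_RInt_ext (fun _ => 0)). 2: apply exR_zero.
    intros x Hx. rewrite Rmin_left in Hx by lra. rewrite Rmax_right in Hx by lra.
    rewrite ind_out. rewrite Rmult_0_r; reflexivity. intro Sx. assert (E x) by (split; [lra|auto]). specialize (Hxl x H1). lra. }
  apply (ex_RInt_Chasles _ l u b).
  { apply (ex_RInt_ext f). 2: apply (ex_RInt_continuous (V:=R_CompleteNormedModule)); intros; apply Hf.
    intros x Hx. rewrite Rmin_left in Hx by lra. rewrite Rmax_right in Hx by lra.
    rewrite ind_in. rewrite Rmult_1_r; reflexivity. apply Hmid; lra. }
  { apply (ex_RInt_ext (fun _ => 0)). 2: apply exR_zero.
    intros x Hx. rewrite Rmin_left in Hx by lra. rewrite Rmax_right in Hx by lra.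
    rewrite ind_out. rewrite Rmult_0_r; reflexivity. intro Sx. assert (E x) by (split; [lra|auto]). specialize (Hxu x H1). lra. }
Qed.

Lemma cvx1 mu th c : 0 < mu -> convex (S1 mu th c).
Proof. intros Hm x y z [H1 H2] [H3 H4] [H5 H6]. split. lra.
  pose proof (mono (mu^2) x y ltac:(nra) H5 ltac:(nra)). lra. Qed.
Lemma cvx2 mu th c : 0 < mu -> convex (S2 mu th c).
Proof. intros Hm x y z [H1 H2] [H3 H4] [H5 H6]. split. lra.
  pose proof (mono (mu^2) y z ltac:(nra) H6 ltac:(nra)). lra. Qed.
Lemma cvx3 mu th c : convex (S3 mu th c).
Proof. intros x y z [H1 H2] [H3 H4] [H5 H6]. split. lra. auto. Qed.
Lemma cvx4 mu th c : 0 < mu -> convex (S4 mu th c).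
Proof. intros Hm x y z [H1 H2] [H3 H4] [H5 H6]. split. lra.
  pose proof (mono (mu^2) x y ltac:(nra) H5 ltac:(nra)). lra. Qed.
Lemma cvx5 mu th c : 0 < mu -> convex (S5 mu th c).
Proof. intros Hm x y z [H1 H2] [H3 H4] [H5 H6]. split. lra.
  pose proof (mono (mu^2) y z ltac:(nra) H6 ltac:(nra)). lra. Qed.

Lemma dens_cont n th : forall z, continuous (ybar_density n th) z.
Proof. intro z. unfold ybar_density. apply (ex_derive_continuous (fun y => sqrt (INR n / (2 * PI)) * exp (- (INR n * (y - th) ^ 2) / 2))). auto_derive. auto. Qed.

Lemma exRInt_A n th mu c a b : 0 < mu -> 0 <= c -> a <= b ->
  ex_RInt (fun y => ybar_density n th y * ind (fun y => c < Rabs (thetaA mu y - th)) y) a b.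
Proof.
  intros Hm Hc Hab.
  pose proof (dens_cont n th) as Hf.
  pose proof (ind_convex _ _ a b Hf (cvx1 mu th c Hm) Hab) as I1.
  pose proof (ind_convex _ _ a b Hf (cvx2 mu th c Hm) Hab) as I2.
  pose proof (ind_convex _ _ a b Hf (cvx3 mu th c) Hab) as I3.
  pose proof (ind_convex _ _ a b Hf (cvx4 mu th c Hm) Hab) as I4.
  pose proof (ind_convex _ _ a b Hf (cvx5 mu th c Hm) Hab) as I5.
  pose proof (ex_RInt_plus _ _ _ _ (ex_RInt_plus _ _ _ _ (ex_RInt_plus _ _ _ _ (ex_RInt_plus _ _ _ _ I1 I2) I3) I4) I5) as I.
  revert I. apply ex_RInt_ext. intros x _.
  cbv beta. unfold plus; simpl. rewrite (decomp mu th c x Hm Hc). ring.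
Qed.
Lemma int_left c th a b : 0 < c -> a <= b -> b <= th ->
  RInt (fun y => exp (-(c * Rabs (y - th)))) a b <= 1 / c.
Proof.
  intros Hc Hab Hb.
  assert (E : RInt (fun y => exp (-(c * Rabs (y - th)))) a b =
              RInt (fun y => exp (c * (y - th))) a b).
  { apply RInt_ext. intros x Hx. rewrite Rmin_left in Hx by lra.
    rewrite Rmax_right in Hx by lra.
    rewrite Rabs_left by lra. f_equal; ring. }
  rewrite E.
  assert (I : is_RInt (fun y => exp (c * (y - th))) a b
     (minus (exp (c * (b - th)) / c) (exp (c * (a - th)) / c))).
  { apply (is_RInt_derive (fun y => exp (c * (y - th)) / c)).
    - intros x _. auto_derive; auto. replace (x + - th) with (x - th) by ring. field. lra.
    - intros x _. apply (ex_derive_continuous (fun y => exp (c*(y-th)))). auto_derive. auto. }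
  rewrite (is_RInt_unique _ _ _ _ I).
  unfold minus, plus, opp; simpl.
  assert (exp (c * (b - th)) <= 1).
  { rewrite <- exp_0. destruct (Req_dec (c*(b-th)) 0) as [e|n]. rewrite e; lra.
    left. apply exp_increasing. nra. }
  assert (0 < exp (c * (a - th))) by apply exp_pos.
  assert (0 < / c) by (apply Rinv_0_lt_compat; lra).
  unfold Rdiv. nra.
Qed.

Lemma cont_K c th : forall z, continuous (fun y => exp (-(c * Rabs (y - th)))) z.
Proof.
  intro z. apply continuity_pt_filterlim.
  apply (continuity_pt_comp (fun y => -(c * Rabs (y - th))) exp).
  - apply continuity_pt_opp. apply continuity_pt_mult. apply continuity_pt_const. intros u v; auto.
    apply (continuity_pt_comp (fun y => y - th) Rabs).
    apply continuity_pt_minus. apply derivable_continuous_pt, derivable_pt_id. apply continuity_pt_const. intros u v; auto.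
    apply Rcontinuity_abs.
  - apply derivable_continuous_pt, derivable_pt_exp.
Qed.

Lemma int_right c th a b : 0 < c -> a <= b -> th <= a ->
  RInt (fun y => exp (-(c * Rabs (y - th)))) a b <= 1 / c.
Proof.
  intros Hc Hab Hb.
  assert (E : RInt (fun y => exp (-(c * Rabs (y - th)))) a b =
              RInt (fun y => exp (-(c * (y - th)))) a b).
  { apply RInt_ext. intros x Hx. rewrite Rmin_left in Hx by lra.
    rewrite Rmax_right in Hx by lra.
    rewrite Rabs_right by lra. f_equal; ring. }
  rewrite E.
  assert (I : is_RInt (fun y => exp (-(c * (y - th)))) a b
     (minus (- exp (-(c * (b - th))) / c) (- exp (-(c * (a - th))) / c))).
  { apply (is_RInt_derive (fun y => - exp (-(c * (y - th))) / c)).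
    - intros x _. auto_derive; auto. replace (x + - th) with (x - th) by ring. field. lra.
    - intros x _. apply (ex_derive_continuous (fun y => exp (-(c*(y-th))))). auto_derive. auto. }
  rewrite (is_RInt_unique _ _ _ _ I).
  unfold minus, plus, opp; simpl.
  assert (exp (-(c * (a - th))) <= 1).
  { rewrite <- exp_0. destruct (Req_dec (-(c*(a-th))) 0) as [e|n]. rewrite e; lra.
    left. apply exp_increasing. nra. }
  assert (0 < exp (-(c * (b - th)))) by apply exp_pos.
  assert (0 < / c) by (apply Rinv_0_lt_compat; lra).
  unfold Rdiv. nra.
Qed.

Lemma exRInt_K c th a b : ex_RInt (fun y => exp (-(c * Rabs (y - th)))) a b.
Proof. apply (ex_RInt_continuous (V:=R_CompleteNormedModule)). intros; apply cont_K. Qed.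

Lemma int_K c th a b : 0 < c -> a <= b ->
  RInt (fun y => exp (-(c * Rabs (y - th)))) a b <= 2 / c.
Proof.
  intros Hc Hab.
  destruct (Rle_dec b th). { pose proof (int_left c th a b Hc Hab r). unfold Rdiv in *.
    assert (0 < / c) by (apply Rinv_0_lt_compat; lra). lra. }
  destruct (Rle_dec th a). { pose proof (int_right c th a b Hc Hab r). unfold Rdiv in *.
    assert (0 < / c) by (apply Rinv_0_lt_compat; lra). lra. }
  rewrite <- (RInt_Chasles _ a th b) by apply exRInt_K.
  pose proof (int_left c th a th Hc ltac:(lra) ltac:(lra)).
  pose proof (int_right c th th b Hc ltac:(lra) ltac:(lra)).
  unfold plus; simpl. unfold Rdiv in *. lra.
Qed.

Lemma exp_le x y : x <= y -> exp x <= exp y.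
Proof. intros [H|H]. left; apply exp_increasing; auto. subst; lra. Qed.

Lemma ind_01 (A : R -> Prop) y : 0 <= ind A y <= 1.
Proof. unfold ind; destruct (excluded_middle_informative (A y)); lra. Qed.

Lemma prob_bound n th (A : R -> Prop) t : (1 <= n)%nat -> 0 < t ->
  (forall a b, a <= b -> ex_RInt (fun y => ybar_density n th y * ind A y) a b) ->
  (forall y, A y -> t < Rabs (y - th)) ->
  Prob n th A <= sqrt (INR n / (2*PI)) * (2 / (INR n * t / 2)).
Proof.
  intros Hn Ht Hint HA.
  set (h := fun y => ybar_density n th y * ind A y).
  set (s := sqrt (INR n / (2*PI))).
  set (c0 := INR n * t / 2).
  set (Cb := s * (2 / c0)).
  assert (HnR : 1 <= INR n) by (apply (le_INR 1); auto).
  assert (Hc0 : 0 < c0) by (unfold c0; nra).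
  assert (Hs : 0 <= s) by apply sqrt_pos.
  set (K := fun y => scal s (exp (-(c0 * Rabs (y - th))))).
  assert (h0 : forall y, 0 <= h y).
  { intro y. unfold h, ybar_density. pose proof (ind_01 A y). pose proof (exp_pos (- (INR n * (y - th) ^ 2) / 2)).
    fold s. apply Rmult_le_pos; [apply Rmult_le_pos|]; lra. }
  assert (hK : forall y, h y <= K y).
  { intro y. unfold h, K, ybar_density, scal; simpl; unfold mult; simpl. fold s.
    destruct (excluded_middle_informative (A y)) as [Ay|Ay].
    - rewrite ind_in by auto. rewrite Rmult_1_r. apply Rmult_le_compat_l; auto.
      apply exp_le. pose proof (HA y Ay). unfold c0.
      assert (Esq : (y - th) ^ 2 = Rabs (y - th) * Rabs (y - th)) by (pose proof (Rsqr_abs (y - th)) as Q; unfold Rsqr in Q; simpl; lra).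
      assert (t * Rabs (y - th) <= (y - th) ^ 2) by (rewrite Esq; apply Rmult_le_compat_r; [apply Rabs_pos|lra]).
      assert (INR n * (t * Rabs (y - th)) <= INR n * (y - th) ^ 2) by (apply Rmult_le_compat_l; lra).
      lra.
    - rewrite ind_out by auto. rewrite Rmult_0_r. pose proof (exp_pos (-(c0 * Rabs (y - th)))). nra. }
  assert (exK : forall a b, ex_RInt K a b).
  { intros a b. unfold K. apply (ex_RInt_scal (V:=R_NormedModule)). apply exRInt_K. }
  pose (F := fun T => RInt h (-T) T).
  assert (Fb : forall T, 0 <= T -> F T <= Cb).
  { intros T HT. unfold F. apply Rle_trans with (RInt K (-T) T).
    apply RInt_le; try lra. apply Hint; lra. apply exK. intros; apply hK.
    unfold K. rewrite (RInt_scal (V:=R_CompleteNormedModule) (fun y => exp (-(c0 * Rabs (y - th))))) by apply exRInt_K. unfold scal; simpl; unfold mult; simpl.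
    unfold Cb. apply Rmult_le_compat_l; auto. apply int_K; lra. }
  assert (Fm : forall T1 T2, 0 <= T1 <= T2 -> F T1 <= F T2).
  { intros T1 T2 HT. unfold F.
    rewrite <- (RInt_Chasles h (-T2) (-T1) T2) by (apply Hint; lra).
    rewrite <- (RInt_Chasles h (-T1) T1 T2) by (apply Hint; lra).
    unfold plus; simpl.
    assert (0 <= RInt h (-T2) (-T1)) by (apply RInt_ge_0; [lra| apply Hint; lra | intros; apply h0]).
    assert (0 <= RInt h T1 T2) by (apply RInt_ge_0; [lra| apply Hint; lra | intros; apply h0]).
    lra. }
  assert (HR : forall T (pr : Riemann_integrable h (-T) T), RiemannInt pr = F T).
  { intros T pr. unfold F. rewrite (RInt_Reals h (-T) T pr). reflexivity. }
  assert (Hex : exists p, is_prob n th A p).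
  { set (E := fun x => exists T, 0 <= T /\ x = F T).
    destruct (completeness E) as [p [Hp1 Hp2]].
    { exists Cb. intros x [T [HT ->]]. apply Fb; auto. }
    { exists (F 0). exists 0. split; lra. }
    exists p. intros eps Heps.
    assert (HT0 : exists T0, 0 <= T0 /\ p - eps < F T0).
    { apply NNPP. intro N. assert (p <= p - eps).
      { apply Hp2. intros x [T [HT ->]]. apply Rnot_lt_le. intro. apply N. eauto. } lra. }
    destruct HT0 as [T0 [HT0 HF0]].
    exists T0. intros T HT.
    assert (pr : Riemann_integrable (fun y => ybar_density n th y * ind A y) (- T) T).
    { apply ex_RInt_Reals_0. apply Hint. lra. }
    exists pr. change (Rabs (RiemannInt (f:=h) pr - p) < eps). rewrite HR.
    assert (F T0 <= F T) by (apply Fm; lra).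
    assert (F T <= p) by (apply Hp1; exists T; split; [lra|auto]).
    apply Rabs_def1; lra. }
  pose proof (epsilon_spec (inhabits 0) (fun p => is_prob n th A p) Hex) as HP.
  fold (Prob n th A) in HP.
  apply Rnot_lt_le. intro Hlt.
  destruct (HP (Prob n th A - Cb) ltac:(lra)) as [T0 HT0].
  destruct (HT0 (Rmax T0 0) (Rmax_l _ _)) as [pr Hpr].
  change (Rabs (RiemannInt (f:=h) pr - Prob n th A) < Prob n th A - Cb) in Hpr.
  rewrite HR in Hpr. pose proof (Fb (Rmax T0 0) (Rmax_r _ _)).
  apply Rabs_def2 in Hpr. lra.
Qed.

Lemma bound_simpl n t : (1 <= n)%nat -> 0 < t ->
  sqrt (INR n / (2*PI)) * (2 / (INR n * t / 2)) <= 4 / (sqrt (INR n) * t).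
Proof.
  intros Hn Ht.
  assert (HnR : 1 <= INR n) by (apply (le_INR 1); auto).
  pose proof PI2_1.
  assert (Hle : sqrt (INR n / (2*PI)) <= sqrt (INR n)).
  { apply sqrt_le_1_alt. unfold Rdiv. rewrite <- (Rmult_1_r (INR n)) at 2.
    apply Rmult_le_compat_l. lra. rewrite <- Rinv_1. apply Rinv_le_contravar; lra. }
  set (r := sqrt (INR n)).
  assert (Hr : 0 < r) by (apply sqrt_lt_R0; lra).
  assert (Hrr : r * r = INR n) by (apply sqrt_sqrt; lra).
  replace (INR n * t / 2) with (r * r * t / 2) by (rewrite Hrr; ring).
  assert (E : 4 / (r * t) = r * (2 / (r * r * t / 2))) by (field; lra).
  rewrite E. apply Rmult_le_compat_r. 2: exact Hle.
  left. unfold Rdiv. apply Rmult_lt_0_compat. lra. apply Rinv_0_lt_compat.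
  apply Rmult_lt_0_compat; [|lra]. apply Rmult_lt_0_compat; [|lra]. nra.
Qed.

Lemma thetaA_bound mu y th : 0 < mu -> Rabs (thetaA mu y - th) <= Rabs (y - th) + mu.
Proof.
  intros Hm. unfold thetaA. destruct (Rle_dec (Rabs y) mu) as [H|H].
  - revert H. split_Rabs; lra.
  - assert (Hy : mu < Rabs y) by lra.
    assert (Hd : Rabs (mu ^ 2 / y) <= mu).
    { assert (y <> 0) by (intro; subst; rewrite Rabs_R0 in Hy; lra).
      unfold Rdiv. rewrite Rabs_mult, Rabs_inv.
      rewrite (Rabs_right (mu^2)) by (simpl; nra).
      assert (0 < Rabs y) by lra.
      apply (Rmult_le_reg_r (Rabs y)); auto.
      rewrite Rmult_assoc, Rinv_l by lra. simpl. nra. }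
    replace (y - mu ^ 2 / y - th) with ((y - th) + - (mu ^ 2 / y)) by ring.
    pose proof (Rabs_triang (y - th) (- (mu ^ 2 / y))). rewrite Rabs_Ropp in H0. lra.
Qed.

Lemma ind_ext (P Q : R -> Prop) y : (P y <-> Q y) -> ind P y = ind Q y.
Proof. intro H. unfold ind. destruct (excluded_middle_informative (P y)); destruct (excluded_middle_informative (Q y)); tauto. Qed.

Theorem theorem1 (mu : nat -> R) (mu_pos : forall n, 0 < mu n)
  (mu_lim : Un_cv mu 0) :
  (forall eps, 0 < eps ->
     forall delta, 0 < delta ->
       exists N : nat, forall n : nat, (N <= n)%nat -> (1 <= n)%nat ->
         forall theta : R,
           Prob n theta (fun y => eps < Rabs (thetaA (mu n) y - theta)) <= delta)
  /\
  (forall eps, 0 < eps ->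
     exists M : R, 0 <= M /\
       exists delta : R, delta < eps /\
         forall n : nat, (1 <= n)%nat -> forall theta : R,
           Prob n theta
             (fun y => M < a_n mu n * Rabs (thetaA (mu n) y - theta)) <= delta).
Proof.
  split.
  - intros eps He delta Hd.
    destruct (mu_lim (eps / 2) ltac:(lra)) as [N1 HN1].
    set (B := 8 / (eps * delta)).
    destruct (INR_unbounded (B * B)) as [N2 HN2].
    exists (Nat.max N1 N2). intros n Hn Hn1 theta.
    assert (HnR : 1 <= INR n) by (apply (le_INR 1); auto).
    assert (Hmu : mu n < eps / 2).
    { specialize (HN1 n ltac:(lia)). unfold Rdist in HN1. rewrite Rminus_0_r in HN1.
      pose proof (mu_pos n). rewrite Rabs_right in HN1 by lra. lra. }
    eapply Rle_trans.
    { apply (prob_bound n theta _ (eps / 2)); auto. lra.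
      - intros a b Hab. apply exRInt_A; auto. lra.
      - intros y Hy. pose proof (thetaA_bound (mu n) y theta (mu_pos n)). lra. }
    eapply Rle_trans. { apply bound_simpl; auto. lra. }
    set (r := sqrt (INR n)).
    assert (Hr : B <= r).
    { unfold r. assert (0 <= B) by (unfold B; unfold Rdiv; apply Rmult_le_pos; [lra| left; apply Rinv_0_lt_compat; nra]).
      rewrite <- (sqrt_square B) by auto. apply sqrt_le_1_alt.
      assert (INR N2 <= INR n) by (apply le_INR; lia). lra. }
    assert (Hr0 : 0 < r) by (unfold r; apply sqrt_lt_R0; lra).
    assert (E1 : B * (eps * delta) = 8) by (unfold B; field; lra).
    assert (8 <= r * (eps * delta)) by (rewrite <- E1; apply Rmult_le_compat_r; [nra|lra]).
    assert (E2 : 4 / (r * (eps / 2)) = 8 / (r * eps)) by (field; lra).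
    rewrite E2. apply (Rmult_le_reg_r (r * eps)). nra.
    unfold Rdiv. rewrite Rmult_assoc, Rinv_l by nra. lra.
  - intros eps He.
    set (M := 1 + 16 / eps).
    assert (HM : M - 1 = 16 / eps) by (unfold M; ring).
    assert (HM0 : 0 < 16 / eps) by (unfold Rdiv; apply Rmult_lt_0_compat; [lra|apply Rinv_0_lt_compat; lra]).
    exists M. split. lra. exists (eps / 2). split. lra.
    intros n Hn theta.
    assert (HnR : 1 <= INR n) by (apply (le_INR 1); auto).
    set (r := sqrt (INR n)).
    assert (Hr0 : 0 < r) by (unfold r; apply sqrt_lt_R0; lra).
    set (an := a_n mu n).
    pose proof (mu_pos n) as Hmun.
    assert (Han_r : an <= r) by apply Rmin_l.
    assert (Han_mu : an <= / mu n) by apply Rmin_r.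
    assert (Han0 : 0 < an).
    { unfold an, a_n. apply Rmin_glb_lt. exact Hr0. apply Rinv_0_lt_compat; auto. }
    assert (Hanmu : an * mu n <= 1).
    { apply Rle_trans with (/ mu n * mu n). apply Rmult_le_compat_r; lra. rewrite Rinv_l; lra. }
    eapply Rle_trans.
    { apply (prob_bound n theta _ ((M - 1) / r)); auto.
      - unfold Rdiv. apply Rmult_lt_0_compat. lra. apply Rinv_0_lt_compat; auto.
      - intros a b Hab.
        apply (ex_RInt_ext (fun y => ybar_density n theta y * ind (fun y => M / an < Rabs (thetaA (mu n) y - theta)) y)).
        + intros x _. f_equal. apply ind_ext. split; intro H.
          * apply (Rmult_lt_compat_l an) in H; auto. unfold Rdiv in H. rewrite <- Rmult_assoc, (Rmult_comm an M), Rmult_assoc, Rinv_r in H by lra. lra.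
          * apply (Rmult_lt_reg_l an); auto. unfold Rdiv. rewrite <- Rmult_assoc, (Rmult_comm an M), Rmult_assoc, Rinv_r by lra. lra.
        + apply exRInt_A; auto. unfold Rdiv. apply Rmult_le_pos. lra. left; apply Rinv_0_lt_compat; auto.
      - intros y Hy. pose proof (thetaA_bound (mu n) y theta Hmun).
        assert (M < r * Rabs (y - theta) + 1).
        { apply Rlt_le_trans with (an * Rabs (thetaA (mu n) y - theta)). exact Hy.
          apply Rle_trans with (an * (Rabs (y - theta) + mu n)). apply Rmult_le_compat_l; lra.
          pose proof (Rabs_pos (y - theta)).
          assert (an * Rabs (y - theta) <= r * Rabs (y - theta)) by (apply Rmult_le_compat_r; lra). lra. }
        apply (Rmult_lt_reg_l r); auto. unfold Rdiv. rewrite <- Rmult_assoc, (Rmult_comm r (M - 1)), Rmult_assoc, Rinv_r by lra. lra. }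
    eapply Rle_trans. { apply bound_simpl; auto. unfold Rdiv. apply Rmult_lt_0_compat. lra. apply Rinv_0_lt_compat; auto. }
    fold r. replace (r * ((M - 1) / r)) with (M - 1) by (field; lra).
    rewrite HM. replace (4 / (16 / eps)) with (eps / 4) by (field; lra). lra.
Qed.
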